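(* Let $K$ be a field and let $P$ be a poset that is not locally finite. Then there is no locally finite poset $Q$ such that $FI(P)$ is isomorphic (as a $K$-algebra) to the incidence algebra $I(Q)$.
   Context: $K$ is a field, $P$ an arbitrary poset. $I(P)$ is the set of functions $\alpha$ assigning to each pair $x\le y$ in $P$ a value $\alpha(x,y)\in K$. An element $\alpha\in I(P)$ is a finitary series if for all $x<y$ in $P$ there are only finitely many pairs $(u,v)$ with $x\le u<v\le y$ and $\alpha(u,v)\neq0$; $FI(P)$ is the set of finitary series. $FI(P)$ is an associative $K$-algebra under pointwise addition and convolution $(\alpha\beta)(x,y)=\sum_{x\le z\le y}\alpha(x,z)\beta(z,y)$. A poset $Q$ is locally finite if every interval $[x,y]=\{z: x\le z\le y\}$ is finite; for such $Q$, $I(Q)$ (all functions on pairs $x\le y$ in $Q$) is the usual incidence algebra under convolution. *)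

(* Defs.v *)
From HB Require Import structures.
From mathcomp Require Import all_boot all_algebra.
From Stdlib Require List.
Set Implicit Arguments. Unset Strict Implicit. Unset Printing Implicit Defensive.
Import GRing.Theory.
Local Open Scope ring_scope.

Record is_poset (T : Type) (le : T -> T -> Prop) : Prop := {
  poset_refl : forall x, le x x;
  poset_antisym : forall x y, le x y -> le y x -> x = y;
  poset_trans : forall x y z, le x y -> le y z -> le x z }.

Definition locally_finite (T : Type) (le : T -> T -> Prop) : Prop :=
  forall x y, exists l : list T, forall z, le x z -> le z y -> List.In z l.

(* Elements of I(P) are represented as functions T -> T -> K that vanish
   outside the pairs x <= y (their values there are irrelevant data). *)
Definition supported (K : fieldType) (T : Type) (le : T -> T -> Prop)
  (a : T -> T -> K) : Prop :=
  forall x y, ~ le x y -> a x y = 0.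

Definition finitary (K : fieldType) (T : Type) (le : T -> T -> Prop)
  (a : T -> T -> K) : Prop :=
  forall x y, le x y -> x <> y ->
    exists l : list (T * T), forall u v,
      le x u -> le u v -> u <> v -> le v y -> a u v != 0 -> List.In (u, v) l.

Definition in_FI (K : fieldType) (T : Type) (le : T -> T -> Prop)
  (a : T -> T -> K) : Prop := supported le a /\ finitary le a.

Definition in_I (K : fieldType) (T : Type) (le : T -> T -> Prop)
  (a : T -> T -> K) : Prop := supported le a.

(* c is the convolution a*b:  c(x,y) = sum_{x<=z<=y} a(x,z) b(z,y) for x <= y,
   where the sum has only finitely many nonzero terms: it is computed over a
   duplicate-free finite list s of elements of [x,y] outside of which all
   terms vanish. *)
Definition conv (K : fieldType) (T : Type) (le : T -> T -> Prop)
  (a b c : T -> T -> K) : Prop :=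
  forall x y, le x y ->
    exists s : list T,
      [/\ List.NoDup s,
          (forall z, List.In z s -> le x z /\ le z y),
          (forall z, le x z -> le z y -> ~ List.In z s -> a x z * b z y = 0)
        & c x y = foldr (fun z acc => a x z * b z y + acc) 0 s].

(* phi is a K-algebra isomorphism FI(P) -> I(Q): it maps FI(P) into I(Q),
   bijectively, and preserves addition, scalar multiplication and the
   convolution product (unit preservation follows from bijectivity). *)
Definition FI_I_alg_iso (K : fieldType) (T : Type) (leP : T -> T -> Prop)
  (U : Type) (leQ : U -> U -> Prop) (phi : (T -> T -> K) -> (U -> U -> K)) : Prop :=
  [/\ (forall a, in_FI leP a -> in_I leQ (phi a)),
      (forall a b, in_FI leP a -> in_FI leP b -> phi a = phi b -> a = b),
      (forall g, in_I leQ g -> exists2 a, in_FI leP a & phi a = g),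
      (forall a b, in_FI leP a -> in_FI leP b ->
         phi (fun x y => a x y + b x y) = (fun u v => phi a u v + phi b u v))
    & (forall (k : K) a, in_FI leP a ->
         phi (fun x y => k * a x y) = (fun u v => k * phi a u v))] /\
  (forall a b c, in_FI leP a -> in_FI leP b -> in_FI leP c ->
     conv leP a b c -> conv leQ (phi a) (phi b) (phi c)).

(* Main.v *)
Require Import Defs.
From HB Require Import structures.
From mathcomp Require Import all_boot all_algebra.
From Stdlib Require Import Classical ClassicalEpsilon FunctionalExtensionality.
Set Implicit Arguments. Unset Strict Implicit. Unset Printing Implicit Defensive.
Import GRing.Theory.
Local Open Scope ring_scope.

Definition pdec (P : Prop) : bool :=
  if excluded_middle_informative P then true else false.
Lemma pdecP (P : Prop) : reflect P (pdec P).
Proof. rewrite /pdec; case: excluded_middle_informative => h; by constructor. Qed.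

Definition cls (U : Type) : Type := U.
Definition ceq (U : Type) (a b : cls U) : bool := pdec (a = b).
Lemma ceq_axiom (U : Type) : Equality.axiom (@ceq U).
Proof. move=> a b; exact: pdecP. Qed.
HB.instance Definition _ (U : Type) := hasDecEq.Build (cls U) (@ceq_axiom U).

Lemma In_mem (U : Type) (w : cls U) (s : seq (cls U)) : List.In w s <-> w \in s.
Proof.
elim: s => [|a s IH] /=; first by split.
rewrite in_cons; split.
  by case=> [->|/IH ->]; rewrite ?eqxx ?orbT.
by case/orP=> [/eqP ->|/IH]; [left|right].
Qed.

Lemma NoDup_uniq (U : Type) (s : seq (cls U)) : List.NoDup s -> uniq s.
Proof.
elim: s => [|a s IH] //= H; inversion H; subst.
rewrite IH // andbT; apply/negP => /In_mem; tauto.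
Qed.

Lemma foldr_big (K : fieldType) (U : Type) (F : cls U -> K) (s : seq (cls U)) :
  foldr (fun w acc => F w + acc) 0 s = \sum_(w <- s) F w.
Proof. elim: s => [|a s IH] /=; by rewrite ?big_nil ?big_cons ?IH. Qed.

Lemma many (T : Type) (S : T -> Prop)
  (H : forall l : list T, exists z, S z /\ ~ List.In z l) :
  forall n, exists l : seq (cls T), size l = n /\ uniq l /\ forall z, z \in l -> S z.
Proof.
elim=> [|n [l [sz [ul Sl]]]]; first by exists [::].
have [z [Sz nz]] := H l.
exists (z :: l); split; first by rewrite /= sz.
split; first by rewrite /= ul andbT; apply/negP => /In_mem.
by move=> w; rewrite in_cons => /orP [/eqP ->|/Sl].
Qed.

Lemma biorth (K : fieldType) n (a b : 'I_n.+1 -> 'I_n -> K) (c : K) :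
  c != 0 -> (forall i i', \sum_j a i j * b i' j = if i == i' then c else 0) -> False.
Proof.
move=> c0 H.
pose A := \matrix_(i, j) a i j : 'M_(n.+1, n).
pose B := \matrix_(j, i) b i j : 'M_(n, n.+1).
have E : A *m B = c%:M.
  apply/matrixP => i i'; rewrite !mxE.
  rewrite (eq_bigr (fun j => a i j * b i' j)); last by move=> j _; rewrite !mxE.
  by rewrite H; case: eqP.
have := mxrankM_maxl A B; rewrite E -scalemx1 mxrank_scale_nz // mxrank1.
move=> h; have := leq_trans h (rank_leq_col A); by rewrite ltnn.
Qed.

Lemma conv_sum (K : fieldType) (U : Type) (leQ : U -> U -> Prop) (a b c : U -> U -> K)
  (u v : U) (L : seq (cls U)) :
  leQ u v -> conv leQ a b c -> uniq L ->
  (forall w, leQ u w -> leQ w v -> (w : cls U) \in L) ->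
  c u v = \sum_(w <- L) (if pdec (leQ u w /\ leQ w v) then a u w else 0) *
                        (if pdec (leQ u w /\ leQ w v) then b w v else 0).
Proof.
move=> uv cv uL HL.
have [s [nd sin zer ->]] := cv u v uv.
rewrite (foldr_big (fun w : cls U => a u w * b w v)).
rewrite [in RHS](bigID (fun w : cls U => w \in (s : seq (cls U)))) /=.
rewrite [X in _ + X]big1 ?addr0; last first.
  move=> w ws; case: pdecP => [[h1 h2]|_]; last by rewrite mul0r.
  apply: zer => //; move=> /In_mem; by rewrite (negbTE ws).
rewrite -[in RHS]big_filter.
have us : uniq (s : seq (cls U)) by exact: NoDup_uniq.
have pe : perm_eq (s : seq (cls U)) [seq w <- L | w \in (s : seq (cls U))].
  apply: uniq_perm => //; first exact: filter_uniq.
  move=> w; rewrite mem_filter; case ws: (w \in (s : seq (cls U))) => //=.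
  symmetry; have [h1 h2] := sin w (proj2 (In_mem w s) ws); exact: HL.
rewrite (perm_big _ pe) /= !big_filter; apply: eq_bigr => w ws.
have [h1 h2] := sin w (proj2 (In_mem w s) ws).
by case: pdecP => // [[]].
Qed.

Definition eu (K : fieldType) (T : Type) (p q : T) : T -> T -> K :=
  fun s t => if ((s : cls T) == p) && ((t : cls T) == q) then 1 else 0.

Lemma inFI_e (K : fieldType) (T : Type) (leP : T -> T -> Prop) p q :
  leP p q -> in_FI leP (@eu K T p q).
Proof.
move=> pq; split.
  move=> s t nst; rewrite /eu; case: eqP => [e1|] //=; case: eqP => [e2|] //.
  by subst.
move=> x y _ _; exists [:: (p, q)] => s t _ _ _ _; rewrite /eu.
case: ((s : cls T) =P p) => [e1|_]; case: ((t : cls T) =P q) => [e2|_] /=;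
  try by rewrite eqxx.
by move=> _; subst; left.
Qed.

Lemma inFI_0 (K : fieldType) (T : Type) (leP : T -> T -> Prop) :
  in_FI leP (fun _ _ : T => (0 : K)).
Proof. split => //; move=> x y _ _; exists [::] => s t _ _ _ _; by rewrite eqxx. Qed.

Lemma conv_e (K : fieldType) (T : Type) (leP : T -> T -> Prop) (x y z z' : T) :
  leP x z -> leP z y ->
  conv leP (@eu K T x z) (@eu K T z' y)
    (if (z : cls T) == z' then @eu K T x y else (fun _ _ => 0)).
Proof.
move=> xz zy x' y' _.
case E: (((x' : cls T) == x) && ((y' : cls T) == y)).
  move/andP: E => [/eqP ex /eqP ey]; subst x' y'.
  exists [:: z]; split.
  - constructor => //; constructor.
  - by move=> w [<-|[]].
  - move=> w _ _ nw; rewrite /eu; case: ((w : cls T) =P z) => [wz|_].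
      by exfalso; apply: nw; left.
    by rewrite andbF mul0r.
  - rewrite /= addr0 /eu !eqxx /=.
    by rewrite andbT mul1r; case: ((z : cls T) == z') => //=; rewrite !eqxx.
exists [::]; split.
- constructor.
- by [].
- move=> w _ _ _; rewrite /eu.
  case: ((x' : cls T) =P x) => [ex|_] /=; last by rewrite mul0r.
  case: ((y' : cls T) =P y) => [ey|_] /=; last by rewrite andbF mulr0.
  by move: E; rewrite ex ey !eqxx.
- rewrite /=; case: eqP => // _; by rewrite /eu E.
Qed.

Unset Implicit Arguments.
Set Strict Implicit.
Theorem corollary5 (K : fieldType) (T : Type) (leP : T -> T -> Prop)
  (HP : is_poset leP) (HnLF : ~ locally_finite leP) :
  ~ exists (U : Type) (leQ : U -> U -> Prop),
      [/\ is_poset leQ, locally_finite leQ &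
          exists phi : (T -> T -> K) -> (U -> U -> K), FI_I_alg_iso leP leQ phi].
Proof.
move=> [U [leQ [HQ HLF [phi [[Hmap Hinj Hsurj Hadd Hscal] Hconv]]]]].
have [x [y Hxy]] : exists x y, forall l : list T,
    exists z, (leP x z /\ leP z y) /\ ~ List.In z l.
  apply: NNPP => H; apply: HnLF => x y; apply: NNPP => H2; apply: H.
  exists x, y => l; apply: NNPP => H3; apply: H2; exists l => z h1 h2.
  apply: NNPP => H4; apply: H3; by exists z.
pose z0 : T -> T -> K := fun _ _ => 0.
have phi0 : forall u v, phi z0 u v = 0.
  move=> u v; have := Hadd z0 z0 (inFI_0 _ _) (inFI_0 _ _).
  have -> : (fun x0 y0 : T => z0 x0 y0 + z0 x0 y0) = z0.
    by apply: functional_extensionality => ?; apply: functional_extensionality => ?;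
       rewrite /z0 addr0.
  move/(congr1 (fun f => f u v)) => /= h.
  by apply/eqP; rewrite -(addrI (phi z0 u v) (esym (etrans (addr0 _) h))).
have [l1 [sz1 [_ Sl1]]] := many Hxy 1.
have lexy : leP x y.
  case: l1 sz1 Sl1 => [|z l] // _ Sl.
  by have [h1 h2] := Sl z (mem_head _ _); exact: (poset_trans HP h1 h2).
have [u [v nz]] : exists u v, phi (@eu K T x y) u v != 0.
  apply: NNPP => H.
  have E : phi (@eu K T x y) = phi z0.
    apply: functional_extensionality => u; apply: functional_extensionality => v.
    rewrite phi0; apply/eqP; apply: NNPP => h; apply: H; by exists u, v; apply/negP.
  have := Hinj _ _ (inFI_e K lexy) (inFI_0 _ _) E.
  move/(congr1 (fun f => f x y)); rewrite /eu /z0 !eqxx /=.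
  by move/eqP; rewrite oner_eq0.
have luv : leQ u v.
  apply: NNPP => h; move: nz; by rewrite (Hmap _ (inFI_e K lexy) u v h) eqxx.
have [L HL] := HLF u v.
pose L' := undup (L : seq (cls U)).
have HL' : forall w, leQ u w -> leQ w v -> (w : cls U) \in L'.
  move=> w h1 h2; rewrite mem_undup; apply/In_mem; exact: HL.
have [l [szl [ul Sl]]] := many Hxy (size L').+1.
pose zi (i : 'I_(size L').+1) : T := nth x l i.
have Szi : forall i, leP x (zi i) /\ leP (zi i) y.
  move=> i; apply: Sl; apply: mem_nth; by rewrite szl.
pose pr w := pdec (leQ u w /\ leQ w v).
apply: (@biorth K (size L')
  (fun i j => (if pr (nth u L' j) then phi (@eu K T x (zi i)) u (nth u L' j) else 0))
  (fun i j => (if pr (nth u L' j) then phi (@eu K T (zi i) y) (nth u L' j) v else 0))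
  _ nz).
move=> i i'.
have [h1 h2] := Szi i; have [h3 h4] := Szi i'.
have cv := Hconv _ _ _ (inFI_e K h1) (inFI_e K h4)
  (_ : in_FI leP (if (zi i : cls T) == zi i' then @eu K T x y else z0))
  (@conv_e K T leP x y (zi i) (zi i') h1 h2).
have key := conv_sum luv (cv _) (undup_uniq _) HL'.
have -> : (i == i') = ((zi i : cls T) == zi i').
  rewrite /zi nth_uniq ?szl //.
have inc : in_FI leP (if (zi i : cls T) == zi i' then @eu K T x y else z0).
  by case: ifP => _; [exact: (inFI_e K lexy) | exact: (inFI_0 K leP)].
have -> : (if (zi i : cls T) == zi i' then phi (@eu K T x y) u v else 0) =
  phi (if (zi i : cls T) == zi i' then @eu K T x y else z0) u v.
  by case: ifP => _; rewrite ?phi0.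
rewrite (key inc) (big_nth u) big_mkord.
by [].
Qed.
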